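(* Let $X,Y$ be countable discrete metric spaces and $d\in D(X,Y)$. Suppose $M_d(X,Y)$ is full as a Hilbert $C^*_u(X)$-module, i.e. the linear span of $\{T^*\circ S: T,S\in M_d(X,Y)\}$ is norm dense in $C^*_u(X)$. Then there exist $L>0$ and a map $f:X\to Y$ such that $d(x,f(x))\le L$ for all $x\in X$.
   Context: $H_X=l^2(X)$ with basis $\{\delta_x\}$. $D(X,Y)$ is the set of metrics on $X\sqcup Y$ restricting to $d_X$ and $d_Y$. For $T:H_X\to H_Y$ bounded, $T_{yx}=\langle T\delta_x,\delta_y\rangle$; $T$ has propagation less than $L$ w.r.t. $d$ if $T_{yx}=0$ whenever $d(x,y)\ge L$. $M_d(X,Y)$ is the norm closure of the bounded finite-propagation operators $H_X\to H_Y$. $C^*_u(X)$ is the norm closure of the bounded operators on $H_X$ of finite propagation w.r.t. $d_X$ (uniform Roe algebra). *)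

(* Defs.v *)
From Stdlib Require Import Reals List.
Import ListNotations.
Open Scope R_scope.

Record C := mkC { Cre : R ; Cim : R }.
Definition C0 : C := mkC 0 0.
Definition Cadd (a b : C) : C := mkC (Cre a + Cre b) (Cim a + Cim b).
Definition Copp (a : C) : C := mkC (- Cre a) (- Cim a).
Definition Csub (a b : C) : C := Cadd a (Copp b).
Definition Cmul (a b : C) : C :=
  mkC (Cre a * Cre b - Cim a * Cim b) (Cre a * Cim b + Cim a * Cre b).
Definition Cconj (a : C) : C := mkC (Cre a) (- Cim a).
Definition Cnorm2 (a : C) : R := Cre a * Cre a + Cim a * Cim a.
Definition Cabs (a : C) : R := sqrt (Cnorm2 a).

Definition lsumC {I : Type} (g : I -> C) (l : list I) : C :=
  fold_right (fun i acc => Cadd (g i) acc) C0 l.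
Definition lsumR {I : Type} (g : I -> R) (l : list I) : R :=
  fold_right (fun i acc => g i + acc) 0 l.

(* unconditional summability of a family indexed by I, with sum c
   (limit of the net of finite partial sums) *)
Definition has_sum {I : Type} (g : I -> C) (c : C) : Prop :=
  forall eps, 0 < eps -> exists G0 : list I,
    forall G : list I, NoDup G -> incl G0 G -> Cabs (Csub (lsumC g G) c) < eps.

Definition is_metric {A : Type} (d : A -> A -> R) : Prop :=
  (forall a b, 0 <= d a b) /\
  (forall a b, d a b = 0 <-> a = b) /\
  (forall a b, d a b = d b a) /\
  (forall a b c, d a c <= d a b + d b c).

Definition countable (A : Type) : Prop :=
  exists e : A -> nat, forall a b, e a = e b -> a = b.

Definition discrete_metric {A : Type} (d : A -> A -> R) : Prop :=
  forall a, exists eps, 0 < eps /\ forall b, d a b < eps -> b = a.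

Definition in_D {X Y : Type} (dX : X -> X -> R) (dY : Y -> Y -> R)
  (d : (X + Y) -> (X + Y) -> R) : Prop :=
  is_metric d /\
  (forall a b, d (inl a) (inl b) = dX a b) /\
  (forall a b, d (inr a) (inr b) = dY a b).

(* ---------- operators as matrices ----------
   An operator T : l^2(A) -> l^2(B) is represented by its matrix
   M b a = <T delta_a, delta_b>. *)
Definition Mat (A B : Type) := B -> A -> C.

(* ||M|| <= r : tested on finitely supported vectors and finitely many
   output coordinates (this is exactly the operator norm bound). *)
Definition opnorm_le {A B : Type} (M : Mat A B) (r : R) : Prop :=
  0 <= r /\
  forall (F : list A) (G : list B) (v : A -> C),
    NoDup F -> NoDup G ->
    lsumR (fun a => Cnorm2 (v a)) F <= 1 ->
    lsumR (fun b => Cnorm2 (lsumC (fun a => Cmul (M b a) (v a)) F)) G <= r * r.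

Definition bounded {A B : Type} (M : Mat A B) : Prop := exists r, opnorm_le M r.

Definition Msub {A B : Type} (M N : Mat A B) : Mat A B := fun b a => Csub (M b a) (N b a).

Definition prop_lt {A B : Type} (dist : A -> B -> R) (M : Mat A B) (L : R) : Prop :=
  forall a b, L <= dist a b -> M b a = C0.

Definition finite_prop {A B : Type} (dist : A -> B -> R) (M : Mat A B) : Prop :=
  exists L, prop_lt dist M L.

Definition in_closure_fp {A B : Type} (dist : A -> B -> R) (M : Mat A B) : Prop :=
  bounded M /\
  forall eps, 0 < eps -> exists N : Mat A B,
    bounded N /\ finite_prop dist N /\ opnorm_le (Msub M N) eps.

Definition in_Md {X Y : Type} (d : (X + Y) -> (X + Y) -> R) (T : Mat X Y) : Prop :=
  in_closure_fp (fun x y => d (inl x) (inr y)) T.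

Definition in_Cu {X : Type} (dX : X -> X -> R) (A : Mat X X) : Prop :=
  in_closure_fp dX A.

Definition is_adj_comp {X Y : Type} (T S : Mat X Y) (P : Mat X X) : Prop :=
  forall x' x, has_sum (fun y => Cmul (Cconj (T y x')) (S y x)) (P x' x).

Definition in_span_adj_comp {X Y : Type} (d : (X + Y) -> (X + Y) -> R)
  (B : Mat X X) : Prop :=
  exists l : list (C * Mat X Y * Mat X Y * Mat X X),
    (forall c T S P, In (c, T, S, P) l -> in_Md d T /\ in_Md d S /\ is_adj_comp T S P) /\
    forall x' x, B x' x = lsumC (fun t => let '(c, _, _, P) := t in Cmul c (P x' x)) l.

Definition full_module {X Y : Type} (dX : X -> X -> R)
  (d : (X + Y) -> (X + Y) -> R) : Prop :=
  forall A : Mat X X, in_Cu dX A ->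
  forall eps, 0 < eps -> exists B, in_span_adj_comp d B /\ opnorm_le (Msub A B) eps.

(* Main.v *)
Require Import Defs.
From Stdlib Require Import Reals List Lra Psatz Classical ClassicalEpsilon.
From Coquelicot Require Complex.
Import ListNotations.
Open Scope R_scope.
Module Basic.

Definition toC (a : Defs.C) : Complex.C := (Cre a, Cim a).

Lemma Cabs_toC a : Cabs a = Complex.Cmod (toC a).
Proof. unfold Cabs, Complex.Cmod, Cnorm2, toC; simpl. f_equal; ring. Qed.

Lemma Cabs_add a b : Cabs (Cadd a b) <= Cabs a + Cabs b.
Proof.
  rewrite !Cabs_toC.
  replace (toC (Cadd a b)) with (Complex.Cplus (toC a) (toC b)).
  apply Complex.Cmod_triangle. reflexivity.
Qed.

Lemma Cabs_mul a b : Cabs (Cmul a b) = Cabs a * Cabs b.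
Proof.
  rewrite !Cabs_toC.
  replace (toC (Cmul a b)) with (Complex.Cmult (toC a) (toC b)).
  apply Complex.Cmod_mult. reflexivity.
Qed.

Lemma Cabs_conj a : Cabs (Cconj a) = Cabs a.
Proof. unfold Cabs, Cnorm2, Cconj; simpl. f_equal; ring. Qed.

Lemma Cabs_opp a : Cabs (Copp a) = Cabs a.
Proof. unfold Cabs, Cnorm2, Copp; simpl. f_equal; ring. Qed.

Lemma Cnorm2_ge0 a : 0 <= Cnorm2 a.
Proof. unfold Cnorm2; nra. Qed.

Lemma Cabs_ge0 a : 0 <= Cabs a.
Proof. apply sqrt_pos. Qed.

Lemma Cabs_sq a : Cabs a * Cabs a = Cnorm2 a.
Proof. apply sqrt_sqrt, Cnorm2_ge0. Qed.

Lemma Cabs_le_of_norm2 a r : 0 <= r -> Cnorm2 a <= r * r -> Cabs a <= r.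
Proof.
  intros Hr H. pose proof (Cabs_sq a). pose proof (Cabs_ge0 a). nra.
Qed.

Lemma Cabs_bound a b t : 0 < t ->
  Cabs (Cmul (Cconj a) b) <= (t * Cnorm2 a + Cnorm2 b / t) / 2.
Proof.
  intros Ht. rewrite Cabs_mul, Cabs_conj, <- !Cabs_sq.
  pose proof (Cabs_ge0 a); pose proof (Cabs_ge0 b).
  set (p := Cabs a) in *; set (q := Cabs b) in *.
  assert (2 * t * (p * q) <= t * t * (p*p) + q * q) by (pose proof (pow2_ge_0 (t*p-q)); nra).
  replace ((t * (p * p) + q * q / t) / 2) with ((t * t * (p*p) + q*q) / (2 * t)) by (field; lra).
  apply Rmult_le_reg_l with (2 * t). lra.
  replace (2 * t * ((t * t * (p * p) + q * q) / (2 * t))) with (t * t * (p * p) + q * q) by (field; lra). lra.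
Qed.

Lemma lsumC_abs {I} (g : I -> Defs.C) l : Cabs (lsumC g l) <= lsumR (fun i => Cabs (g i)) l.
Proof.
  induction l as [|i l IH]; simpl.
  - unfold Cabs, Cnorm2; simpl. rewrite Rmult_0_l, Rplus_0_l, sqrt_0; lra.
  - eapply Rle_trans; [apply Cabs_add|]. lra.
Qed.

Lemma lsumR_le {I} (f g : I -> R) l : (forall i, In i l -> f i <= g i) -> lsumR f l <= lsumR g l.
Proof.
  induction l as [|i l IH]; simpl; intros H; [lra|].
  pose proof (H i (or_introl eq_refl)). assert (lsumR f l <= lsumR g l) by (apply IH; auto). lra.
Qed.

Lemma lsumR_ext {I} (f g : I -> R) l : (forall i, f i = g i) -> lsumR f l = lsumR g l.
Proof. intros H; induction l; simpl; [lra|]. rewrite H, IHl; lra. Qed.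

Lemma lsumR_plus {I} (f g : I -> R) l : lsumR (fun i => f i + g i) l = lsumR f l + lsumR g l.
Proof. induction l; simpl; [lra|]. rewrite IHl; lra. Qed.

Lemma lsumR_scal {I} (f : I -> R) k l : lsumR (fun i => k * f i) l = k * lsumR f l.
Proof. induction l; simpl; [lra|]. rewrite IHl; lra. Qed.

Lemma lsumR_scalr {I} (f : I -> R) k l : lsumR (fun i => f i * k) l = lsumR f l * k.
Proof. induction l; simpl; [lra|]. rewrite IHl; lra. Qed.

Lemma lsumR_ge0 {I} (f : I -> R) l : (forall i, 0 <= f i) -> 0 <= lsumR f l.
Proof. intros H; induction l; simpl; [lra|]. specialize (H a). lra. Qed.
End Basic.
Import Basic.
Module Ops.

Definition C1 : Defs.C := mkC 1 0.

Lemma opnorm_col {A B} (M : Mat A B) r x G : opnorm_le M r -> NoDup G ->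
  lsumR (fun y => Cnorm2 (M y x)) G <= r * r.
Proof.
  intros [Hr H] HG.
  specialize (H [x] G (fun _ => C1) (NoDup_cons _ (@in_nil _ _) (NoDup_nil _)) HG).
  assert (E: forall y, Cnorm2 (lsumC (fun a => Cmul (M y a) C1) [x]) = Cnorm2 (M y x)).
  { intros y; unfold lsumC, Cnorm2, C1, Cmul, Cadd, C0; simpl. ring. }
  rewrite <- (lsumR_ext _ _ G E). apply H.
  unfold lsumR, Cnorm2, C1; simpl; lra.
Qed.

Lemma opnorm_entry {A B} (M : Mat A B) r x y : opnorm_le M r -> Cabs (M y x) <= r.
Proof.
  intros H. pose proof (opnorm_col M r x [y] H (NoDup_cons _ (@in_nil _ _) (NoDup_nil _))).
  destruct H as [Hr _]. simpl in H0. apply Cabs_le_of_norm2; auto. lra.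
Qed.

Lemma opnorm_mono {A B} (M : Mat A B) r r' : opnorm_le M r -> r <= r' -> opnorm_le M r'.
Proof.
  intros [Hr H] Hle. split; [lra|]. intros F G v HF HG Hv.
  eapply Rle_trans; [apply H; auto|]. nra.
Qed.

Lemma lsumC_zero {I} (g : I -> Defs.C) l : (forall i, g i = C0) -> lsumC g l = C0.
Proof.
  intros H; induction l; simpl; auto. rewrite H, IHl. unfold Cadd, C0; simpl. f_equal; ring.
Qed.

Lemma lsumC_zero_in {I} (g : I -> Defs.C) l : (forall i, In i l -> g i = C0) -> lsumC g l = C0.
Proof.
  intros H; induction l; simpl; auto. rewrite H, IHl. unfold Cadd, C0; simpl. f_equal; ring.
  intros; apply H; right; auto. left; auto.
Qed.

Lemma opnorm_zero {A B} (M : Mat A B) r : 0 <= r -> (forall b a, M b a = C0) -> opnorm_le M r.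
Proof.
  intros Hr H. split; auto. intros F G v _ _ _.
  rewrite (lsumR_ext _ (fun _ => 0)).
  - clear. induction G; simpl; nra.
  - intros b. rewrite lsumC_zero. unfold Cnorm2, C0; simpl; ring.
    intros a. rewrite H. unfold Cmul, C0; simpl. f_equal; ring.
Qed.

Definition Id {X} : Mat X X := fun b a =>
  if excluded_middle_informative (b = a) then C1 else C0.

Lemma lsumR_single {X} (a0 : X) c G : 0 <= c -> NoDup G ->
  lsumR (fun b => if excluded_middle_informative (b = a0) then c else 0) G <= c.
Proof.
  intros Hc HG. induction HG as [|b G Hn HG IH]; simpl; [lra|].
  destruct (excluded_middle_informative (b = a0)).
  - subst. assert (lsumR (fun b => if excluded_middle_informative (b = a0) then c else 0) G = 0).
    { clear -Hn. induction G; simpl; auto. destruct (excluded_middle_informative (a = a0)).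
      subst; exfalso; apply Hn; left; auto. rewrite IHG; [lra|]. intros h; apply Hn; right; auto. }
    lra.
  - lra.
Qed.

Lemma Id_col_zero {X} (a0 : X) (v : X -> Defs.C) F : ~ In a0 F ->
  lsumC (fun a => Cmul (Id a0 a) (v a)) F = C0.
Proof.
  intros Hn. apply lsumC_zero_in. intros a Ha. unfold Id.
  destruct (excluded_middle_informative (a0 = a)).
  - subst; exfalso; auto.
  - unfold Cmul, C0; simpl; f_equal; ring.
Qed.

Lemma Id_sum {X} (v : X -> Defs.C) F G : NoDup F -> NoDup G ->
  lsumR (fun b => Cnorm2 (lsumC (fun a => Cmul (Id b a) (v a)) F)) G
  <= lsumR (fun a => Cnorm2 (v a)) F.
Proof.
  intros HF HG. induction HF as [|a0 F Hn HF IH].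
  - simpl. rewrite (lsumR_ext _ (fun _ => 0)). clear; induction G; simpl; lra.
    intros; unfold Cnorm2, C0; simpl; ring.
  - simpl.
    rewrite (lsumR_ext _ (fun b => (if excluded_middle_informative (b = a0) then Cnorm2 (v a0) else 0)
        + Cnorm2 (lsumC (fun a => Cmul (Id b a) (v a)) F))).
    + rewrite lsumR_plus. pose proof (lsumR_single a0 (Cnorm2 (v a0)) G (Cnorm2_ge0 _) HG). lra.
    + intros b. destruct (excluded_middle_informative (b = a0)).
      * subst. rewrite Id_col_zero by auto. unfold Id.
        destruct (excluded_middle_informative (a0 = a0)); [|tauto].
        unfold Cnorm2, Cadd, Cmul, C1, C0; simpl; ring.
      * unfold Id at 1. destruct (excluded_middle_informative (b = a0)); [tauto|].
        unfold Cnorm2, Cadd, Cmul, C0; simpl; ring.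
Qed.

Lemma Id_opnorm {X} : opnorm_le (@Id X) 1.
Proof.
  split; [lra|]. intros F G v HF HG Hv. eapply Rle_trans; [apply Id_sum; auto|]. lra.
Qed.

Lemma Id_Cu {X} (dX : X -> X -> R) : is_metric dX -> in_Cu dX (@Id X).
Proof.
  intros (H0 & H1 & _). split; [exists 1; apply Id_opnorm|].
  intros eps Heps. exists Id. split; [exists 1; apply Id_opnorm|]. split.
  - exists 1. intros a b Hab. unfold Id. destruct (excluded_middle_informative (b = a)); auto.
    subst. assert (dX a a = 0) by (apply H1; auto). lra.
  - apply opnorm_zero; [lra|]. intros b a. unfold Msub, Csub, Cadd, Copp, C0; simpl. f_equal; ring.
Qed.

Lemma has_sum_bound {I} (g : I -> Defs.C) c b : has_sum g c ->
  (forall G, NoDup G -> lsumR (fun i => Cabs (g i)) G <= b) -> Cabs c <= b.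
Proof.
  intros Hs Hb. apply Rnot_lt_le; intros Hlt.
  destruct (Hs ((Cabs c - b)/2)) as [G0 HG0]; [lra|].
  set (G := nodup (fun a b => excluded_middle_informative (a = b)) G0).
  assert (HG: NoDup G) by apply NoDup_nodup.
  assert (Hi: incl G0 G) by (intros a Ha; apply nodup_In; auto).
  specialize (HG0 G HG Hi). specialize (Hb G HG).
  pose proof (lsumC_abs g G).
  assert (E: c = Cadd (lsumC g G) (Copp (Csub (lsumC g G) c))).
  { destruct c, (lsumC g G); unfold Cadd, Copp, Csub; simpl; f_equal; ring. }
  pose proof (Cabs_add (lsumC g G) (Copp (Csub (lsumC g G) c))).
  rewrite <- E, Cabs_opp in H0. lra.
Qed.

Lemma P_bound {X Y} (T S : Mat X Y) p x e r :
  has_sum (fun y => Cmul (Cconj (T y x)) (S y x)) p ->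
  (forall G, NoDup G -> lsumR (fun y => Cnorm2 (T y x)) G <= e * e) ->
  (forall G, NoDup G -> lsumR (fun y => Cnorm2 (S y x)) G <= r * r) ->
  0 < e -> Cabs p <= (e + r * r * e) / 2.
Proof.
  intros Hs HT HS He. apply (has_sum_bound _ _ _ Hs). intros G HG.
  eapply Rle_trans.
  { apply lsumR_le. intros y _. apply (Cabs_bound (T y x) (S y x) (/ e)). apply Rinv_0_lt_compat; auto. }
  rewrite (lsumR_ext _ (fun y => (/ e / 2) * Cnorm2 (T y x) + (e / 2) * Cnorm2 (S y x))).
  2:{ intros y. field. lra. }
  rewrite lsumR_plus, !lsumR_scal.
  specialize (HT G HG). specialize (HS G HG).
  assert (/ e / 2 * lsumR (fun y => Cnorm2 (T y x)) G <= / e / 2 * (e * e)).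
  { apply Rmult_le_compat_l; auto. pose proof (Rinv_0_lt_compat e He). lra. }
  assert (e / 2 * lsumR (fun y => Cnorm2 (S y x)) G <= e / 2 * (r * r)) by (apply Rmult_le_compat_l; lra).
  replace ((e + r * r * e) / 2) with (/ e / 2 * (e * e) + e / 2 * (r * r)) by (field; lra). lra.
Qed.
End Ops.
Import Ops.

Lemma list_uniform {A} (l : list A) (Q : A -> R -> Prop) :
  (forall a r r', r <= r' -> Q a r -> Q a r') ->
  (forall a, In a l -> exists r, Q a r) ->
  exists R0, 0 < R0 /\ forall a, In a l -> Q a R0.
Proof.
  intros Hm. induction l as [|a l IH]; intros Hex.
  - exists 1; split; [lra|]. intros a [].
  - destruct IH as [R0 [HR0 H0]]. { intros b Hb; apply Hex; right; auto. }
    destruct (Hex a (or_introl eq_refl)) as [r Hr].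
    exists (Rmax R0 r). split. { eapply Rlt_le_trans; [apply HR0|apply Rmax_l]. }
    intros b [<-|Hb].
    + eapply Hm; [apply Rmax_r|auto].
    + eapply Hm; [apply Rmax_l|auto].
Qed.

Theorem mainTheorem3 (X Y : Type) (dX : X -> X -> R) (dY : Y -> Y -> R)
  (hXc : countable X) (hYc : countable Y)
  (hXm : is_metric dX) (hYm : is_metric dY)
  (hXd : discrete_metric dX) (hYd : discrete_metric dY)
  (d : (X + Y) -> (X + Y) -> R) (hd : in_D dX dY d)
  (hfull : full_module dX d) :
  exists L : R, 0 < L /\ exists f : X -> Y, forall x, d (inl x) (inr (f x)) <= L.
Proof.
  destruct (hfull Id (Id_Cu dX hXm) (1/2)) as [B [[l [Hl HB]] Hnorm]]; [lra|].
  destruct (list_uniform l (fun t r => opnorm_le (snd (fst t)) r)) as [R0 [HR0 HRl]].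
  { intros t r r' Hle H; eapply opnorm_mono; eauto. }
  { intros [[[c T] S] P] Ht. destruct (Hl _ _ _ _ Ht) as [_ [[[r Hr] _] _]]. exists r; exact Hr. }
  set (K := lsumR (fun t => Cabs (fst (fst (fst t)))) l).
  assert (HK : 0 <= K) by (apply lsumR_ge0; intros; apply Cabs_ge0).
  set (eps := 1 / ((1 + K) * (1 + R0 * R0))).
  assert (Heps : 0 < eps).
  { unfold eps. apply Rdiv_lt_0_compat; [lra|]. apply Rmult_lt_0_compat; nra. }
  destruct (list_uniform l (fun t L => exists N, prop_lt (fun x y => d (inl x) (inr y)) N L
      /\ opnorm_le (Msub (snd (fst (fst t))) N) eps)) as [L [HL HLl]].
  { intros t r r' Hle [N [HN1 HN2]]. exists N; split; auto. intros a b Hab. apply HN1. lra. }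
  { intros [[[c T] S] P] Ht. destruct (Hl _ _ _ _ Ht) as [[_ HT] _].
    destruct (HT eps Heps) as [N [_ [[L HN] HN2]]]. exists L, N; split; auto. }
  exists L. split; auto.
  assert (Hx : forall x, exists y, d (inl x) (inr y) <= L).
  { intros x. apply NNPP; intros Hn.
    assert (Hy : forall y, L <= d (inl x) (inr y)).
    { intros y. apply Rlt_le, Rnot_le_lt. intros h; apply Hn; exists y; auto. }
    assert (HBx : Cabs (B x x) <= K * ((eps + R0 * R0 * eps) / 2)).
    { rewrite HB. eapply Rle_trans; [apply lsumC_abs|].
      unfold K. rewrite <- lsumR_scalr. apply lsumR_le.
      intros [[[c T] S] P] Ht. simpl. rewrite Cabs_mul.
      apply Rmult_le_compat_l; [apply Cabs_ge0|].
      destruct (Hl _ _ _ _ Ht) as [_ [_ HP]].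
      destruct (HLl _ Ht) as [N [HN1 HN2]]. simpl in HN2.
      specialize (HRl _ Ht). simpl in HRl.
      apply (P_bound T S (P x x) x eps R0 (HP x x)); auto.
      - intros G HG. rewrite (lsumR_ext _ (fun y => Cnorm2 (Msub T N y x))).
        + apply opnorm_col; auto.
        + intros y. unfold Msub. rewrite (HN1 x y (Hy y)).
          unfold Cnorm2, Csub, Cadd, Copp, C0; simpl; ring.
      - intros G HG. apply opnorm_col; auto. }
    assert (Hlt : K * ((eps + R0 * R0 * eps) / 2) < 1/2).
    { replace (K * ((eps + R0 * R0 * eps) / 2)) with (K / (1 + K) / 2).
      - apply Rmult_lt_reg_l with (2 * (1 + K)); [lra|].
        replace (2 * (1 + K) * (K / (1 + K) / 2)) with K by (field; lra). lra.
      - unfold eps. field. split; nra. }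
    pose proof (opnorm_entry _ _ x x Hnorm) as He. unfold Msub in He.
    assert (HI : Id x x = Ops.C1).
    { unfold Id. destruct (excluded_middle_informative (x = x)); tauto. }
    rewrite HI in He.
    pose proof (Cabs_add (Csub Ops.C1 (B x x)) (B x x)) as Ht.
    replace (Cadd (Csub Ops.C1 (B x x)) (B x x)) with Ops.C1 in Ht
      by (destruct (B x x); unfold Cadd, Csub, Copp, Ops.C1; simpl; f_equal; ring).
    assert (Cabs Ops.C1 = 1) by (unfold Cabs; replace (Cnorm2 Ops.C1) with 1 by (unfold Cnorm2, Ops.C1; simpl; ring); apply sqrt_1).
    lra. }
  exists (fun x => proj1_sig (constructive_indefinite_description _ (Hx x))).
  intros x. exact (proj2_sig (constructive_indefinite_description _ (Hx x))).
Qed.
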